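(* For every prime power $q$ and every integer $k\ge 2$, there exists an $[n,k]_q$ maximum weight spectrum (MWS) code with $n=2^{\theta_q(k-1)}-1$, where $\theta_q(k-1)=\frac{q^k-1}{q-1}$.
   Context: An $[n,k]_q$ code is a $k$-dimensional $\mathbb{F}_q$-linear subspace $\mathcal{C}$ of $\mathbb{F}_q^n$ with the Hamming weight $w(c)=|\{i: c_i\neq 0\}|$. Standing convention: codes of dimension $k\ge 2$ are non-degenerate, i.e. no coordinate position is identically zero on $\mathcal{C}$. The weight set is $w(\mathcal{C})=\{w(c): c\in\mathcal{C}\setminus\{0\}\}$. For integers $m\ge 0$, $\theta_q(m)=\frac{q^{m+1}-1}{q-1}$. One always has $|w(\mathcal{C})|\le\theta_q(k-1)$, and $\mathcal{C}$ is called a maximum weight spectrum (MWS) code if $|w(\mathcal{C})|=\theta_q(k-1)$. *)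

(* Defs.v *)
From HB Require Import structures.
From mathcomp Require Import all_boot all_order all_algebra.
Set Implicit Arguments. Unset Strict Implicit. Unset Printing Implicit Defensive.
Import GRing.Theory.
Local Open Scope ring_scope.

Definition theta (q m : nat) : nat := ((q ^ m.+1 - 1) %/ (q - 1))%N.

Section Codes.
Variables (F : finFieldType) (n : nat).

Definition hweight (c : 'rV[F]_n) : nat := #|[set i : 'I_n | c ord0 i != 0]|.

Definition weight_set (C : {vspace 'rV[F]_n}) : seq nat :=
  undup [seq hweight c | c <- enum [set: 'rV[F]_n] & (c \in C) && (c != 0)].

Definition code_nondegenerate (C : {vspace 'rV[F]_n}) : Prop :=
  forall i : 'I_n, exists2 c : 'rV[F]_n, c \in C & c ord0 i != 0.

Definition is_MWS (C : {vspace 'rV[F]_n}) : Prop :=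
  size (weight_set C) = theta #|F| (\dim C).-1.

End Codes.

(* Main.v *)
Require Import Defs.
From HB Require Import structures.
From mathcomp Require Import all_boot all_order all_algebra.
From mathcomp Require Import ring zify.
Set Implicit Arguments. Unset Strict Implicit. Unset Printing Implicit Defensive.
Lemma bin_bound (a : nat -> bool) N : \sum_(j < N) a j * 2 ^ j < 2 ^ N.
Proof.
elim: N => [|N IH]; first by rewrite big_ord0.
rewrite big_ord_recr /= expnS.
have : a N * 2 ^ N <= 2 ^ N by case: (a N); rewrite ?mul1n ?mul0n.
move=> h; by rewrite mul2n -addnn -addSn; apply: leq_add.
Qed.

Lemma bin_inj (a b : nat -> bool) N :
  \sum_(j < N) a j * 2 ^ j = \sum_(j < N) b j * 2 ^ j -> forall j, j < N -> a j = b j.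
Proof.
elim: N => [|N IH] // E j Hj.
move: E; rewrite !big_ord_recr /= => E.
have Ea : (\sum_(i < N) a i * 2 ^ i + a N * 2 ^ N) %/ 2 ^ N = a N.
  by rewrite addnC divnMDl ?expn_gt0 // divn_small ?bin_bound // addn0.
have Eb : (\sum_(i < N) b i * 2 ^ i + b N * 2 ^ N) %/ 2 ^ N = b N.
  by rewrite addnC divnMDl ?expn_gt0 // divn_small ?bin_bound // addn0.
have EN : a N = b N.
  have : (a N : nat) = b N by rewrite -Ea -Eb E.
  by case: (a N); case: (b N).
rewrite ltnS leq_eqVlt in Hj; case/orP: Hj => [/eqP -> //|H].
apply: IH => //; move: E; rewrite EN => /eqP; by rewrite eqn_add2r => /eqP.
Qed.

Lemma sum_split (a : nat -> bool) m :
  \sum_(0 <= i < 2 ^ m - 1) a (trunc_log 2 i.+1) = \sum_(j < m) a j * 2 ^ j.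
Proof.
elim: m => [|m IH]; first by rewrite big_ord0 expn0 subnn big_geq.
have h1 : 0 < 2 ^ m by rewrite expn_gt0.
rewrite big_ord_recr /= -IH (big_cat_nat _ (n := 2 ^ m - 1)) //=; last first.
  rewrite expnS; move: (2 ^ m) h1 => t ht; lia.
congr (_ + _).
rewrite (eq_big_nat _ _ (F2 := fun _ => nat_of_bool (a m))).
  rewrite sum_nat_const_nat expnS mulnC; congr (_ * _); move: (2 ^ m) h1 => t ht; lia.
move=> i /andP [H1 H2]; congr (nat_of_bool (a _)); apply: trunc_log_eq => //.
rewrite expnS in H2 *; apply/andP; move: (2 ^ m) h1 H1 H2 => t ht H1 H2; split; lia.
Qed.

Import GRing.Theory.
Local Open Scope ring_scope.

Section Reps.
Variables (F : finFieldType) (k : nat).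

Definition isRep (r : 'rV[F]_k) : bool :=
  [exists l : 'I_k, (r 0 l == 1) && [forall l' : 'I_k, (l' < l)%N ==> (r 0 l' == 0)]].

Definition Reps := [set r | isRep r].

Definition dd (u v : 'rV[F]_k) : F := \sum_(l < k) u 0 l * v 0 l.

Lemma rep_neq0 r : isRep r -> r != 0.
Proof.
case/existsP => l /andP [/eqP H _]; apply/eqP => Hr.
by move: H; rewrite Hr mxE => /eqP; rewrite eq_sym oner_eq0.
Qed.

Lemma neq0_entry (v : 'rV[F]_k) : v != 0 -> exists l, v 0 l != 0.
Proof.
move=> Hv; case: (pickP (fun l => v 0 l != 0)) => [l Hl|H]; first by exists l.
case/eqP: Hv; apply/rowP => l; rewrite mxE; move: (H l) => /= /negbFE /eqP //.
Qed.

Lemma rep_decomp (v : 'rV[F]_k) : v != 0 ->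
  exists a r, [/\ a != 0, isRep r & v = a *: r].
Proof.
move=> /neq0_entry [l0 Hl0].
case: (@arg_minnP _ l0 (fun l => v 0 l != 0) (fun l : 'I_k => nat_of_ord l) Hl0) => l Hl Hmin.
exists (v 0 l), ((v 0 l)^-1 *: v); split => //.
  apply/existsP; exists l; rewrite mxE mulVf // eqxx /=.
  apply/forallP => l'; apply/implyP => Hlt; rewrite mxE.
  case: (eqVneq (v 0 l') 0) => [->|H]; first by rewrite mulr0.
  by move: (Hmin l' H); rewrite leqNgt Hlt.
by rewrite scalerA divff // scale1r.
Qed.

Lemma rep_uniq r s a : isRep r -> isRep s -> r = a *: s -> r = s.
Proof.
case/existsP => l /andP [/eqP Hl /forallP Hl'].
case/existsP => m /andP [/eqP Hm /forallP Hm'] E.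
have Ha : a = 1.
  case: (ltngtP l m) => H.
  - move: (Hm' l); rewrite H /= => /eqP Hs.
    by move: Hl; rewrite E mxE Hs mulr0 => /eqP; rewrite eq_sym oner_eq0.
  - move: (Hl' m); rewrite H /= => /eqP Hr.
    by move: Hr; rewrite E mxE Hm mulr1 => Ha; move: Hl; rewrite E mxE Ha mul0r => /eqP; rewrite eq_sym oner_eq0.
  - have Hlm : l = m by apply/val_inj.
    by move: Hl; rewrite E mxE Hlm Hm mulr1.
by rewrite E Ha scale1r.
Qed.

Lemma delta_rep l : isRep (delta_mx 0 l).
Proof.
apply/existsP; exists l; rewrite mxE !eqxx /=.
apply/forallP => l'; apply/implyP => H; rewrite mxE eqxx /=.
have Hne : l' != l by apply/eqP => E; move: H; rewrite E ltnn.
by rewrite (negbTE Hne).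
Qed.

Lemma card_Reps : (#|Reps| * (#|F| - 1) = #|F| ^ k - 1)%N.
Proof.
pose h := fun p : F * 'rV[F]_k => p.1 *: p.2.
have inj : {in setX [set~ (0:F)] Reps &, injective h}.
  move=> [a r] [b s]; rewrite !inE /= => /andP [Ha Hr] /andP [Hb Hs] E.
  rewrite /h /= in E.
  have Hrs : r = s.
    apply: (rep_uniq (a := b / a)) => //.
    by rewrite mulrC -scalerA -E scalerA mulVf // scale1r.
  subst s; congr (_, _); apply/eqP; rewrite -subr_eq0.
  have : (a - b) *: r == 0 by rewrite scalerBl E subrr.
  by rewrite scaler_eq0 (negbTE (rep_neq0 Hr)) orbF.
have Eim : [set h x | x in setX [set~ (0:F)] Reps] = [set~ 0].
  apply/setP => v; rewrite !inE; apply/imsetP/idP.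
    case=> [[a r]]; rewrite !inE /= => /andP [Ha Hr] ->.
    by rewrite /h /= scaler_eq0 negb_or Ha rep_neq0.
  move=> Hv; case: (rep_decomp Hv) => a [r [Ha Hr E]].
  by exists (a, r) => //; rewrite !inE /= Ha.
move: (card_in_imset inj); rewrite Eim cardsC1 cardsX cardsC1 card_mx mul1n => E.
by rewrite mulnC !subn1 -E.
Qed.


Lemma dd_scaler u v a : dd u (a *: v) = a * dd u v.
Proof. by rewrite /dd mulr_sumr; apply: eq_bigr => l _; rewrite mxE mulrCA. Qed.

Lemma dd_scalel u v a : dd (a *: u) v = a * dd u v.
Proof. by rewrite /dd mulr_sumr; apply: eq_bigr => l _; rewrite mxE mulrA. Qed.

Lemma dd_sub u v w : dd u (v - w) = dd u v - dd u w.
Proof. by rewrite /dd -sumrB; apply: eq_bigr => l _; rewrite !mxE mulrBr. Qed.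

Lemma dd_sym u v : dd u v = dd v u.
Proof. by rewrite /dd; apply: eq_bigr => l _; rewrite mulrC. Qed.

Lemma dd0 u : dd u 0 = 0.
Proof. by rewrite /dd big1 // => l _; rewrite mxE mulr0. Qed.

Lemma dd_delta u m : dd u (delta_mx 0 m) = u 0 m.
Proof.
rewrite /dd (bigD1 m) //= big1 => [|l Hl]; first by rewrite mxE !eqxx mulr1 addr0.
by rewrite mxE eqxx (negbTE Hl) mulr0.
Qed.

Lemma dd_prop (r s : 'rV[F]_k) : r != 0 ->
  (forall v, (dd r v == 0) = (dd s v == 0)) -> exists c, s = c *: r.
Proof.
move=> /neq0_entry [l Hl] H.
exists (s 0 l / r 0 l); apply/rowP => m; rewrite mxE.
pose v : 'rV[F]_k := r 0 l *: delta_mx 0 m - r 0 m *: delta_mx 0 l.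
have : dd r v == 0 by rewrite /v dd_sub !dd_scaler !dd_delta mulrC subrr.
rewrite H /v dd_sub !dd_scaler !dd_delta subr_eq0 => /eqP E.
apply: (mulfI Hl); rewrite E; field; exact: Hl.
Qed.

Lemma theta_Reps : (0 < k)%N -> theta #|F| (k - 1) = #|Reps|.
Proof.
move=> Hk; rewrite /theta (subn1 k) prednK // -card_Reps mulnK //.
by rewrite subn_gt0 card_finNzRing_gt1.
Qed.

End Reps.

Section Code.
Variables (F : finFieldType) (k : nat).

Let N := #|Reps F k|.
Let P := enum (Reps F k).
Let n := (2 ^ N - 1)%N.

Definition col (i : 'I_n) : 'rV[F]_k := nth 0 P (trunc_log 2 i.+1).
Definition MM : 'M[F]_(k, n) := \matrix_(l, i) col i 0 l.

Lemma size_P : size P = N.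
Proof. by rewrite /P /N cardE. Qed.

Lemma nthP_rep j : (j < N)%N -> nth 0 P j \in Reps F k.
Proof. by move=> Hj; rewrite -(mem_enum (Reps F k)) mem_nth // size_P. Qed.

Lemma entryM (u : 'rV[F]_k) i : (u *m MM) 0 i = dd u (col i).
Proof. by rewrite !mxE; apply: eq_bigr => l _; rewrite mxE. Qed.

Lemma col_rep i : col i \in Reps F k.
Proof.
apply: nthP_rep; rewrite ltnNge; apply/negP => H.
have Hi : (i < 2 ^ N - 1)%N := ltn_ord i.
have h1 : (2 ^ N <= 2 ^ trunc_log 2 i.+1)%N by rewrite leq_exp2l.
have h2 := @trunc_logP 2 i.+1 (erefl _) (erefl _).
have h3 : (0 < 2 ^ N)%N by rewrite expn_gt0.
move: (2 ^ N)%N (2 ^ trunc_log 2 i.+1)%N h1 h2 h3 Hi => a b; lia.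
Qed.

Lemma hit j : (j < N)%N -> exists i : 'I_n, col i = nth 0 P j.
Proof.
move=> Hj.
have Hlt : (2 ^ j - 1 < n)%N.
  rewrite /n; have h : (2 ^ j < 2 ^ N)%N by rewrite ltn_exp2l.
  have h3 : (0 < 2 ^ j)%N by rewrite expn_gt0.
  move: (2 ^ N)%N (2 ^ j)%N h h3 => a b; lia.
exists (Ordinal Hlt); rewrite /col /=.
have -> : ((2 ^ j - 1).+1 = 2 ^ j)%N by rewrite subn1 prednK // expn_gt0.
by rewrite trunc_expnK.
Qed.

Lemma weightM (u : 'rV[F]_k) : hweight (u *m MM) = (\sum_(j < N) (dd u (nth 0%R P j) != 0%R) * 2 ^ j)%N.
Proof.
rewrite /hweight -sum1_card big_mkcond /=.
rewrite -(sum_split (fun j => dd u (nth 0 P j) != 0)) big_mkord.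
by apply: eq_bigr => i _; rewrite inE entryM /col; case: (_ != 0).
Qed.

Lemma injM (u : 'rV[F]_k) : u *m MM = 0 -> u = 0.
Proof.
move=> E; case: (eqVneq u 0) => // /neq0_entry [l Hl].
have Hd := delta_rep F l.
have Hin : delta_mx 0 l \in P by rewrite mem_enum inE.
have Hj : (index (delta_mx 0%R l : 'rV[F]_k) P < N)%N by rewrite -size_P index_mem.
case: (hit Hj) => i Hi.
move: (entryM u i); rewrite E Hi nth_index // dd_delta mxE => H.
by move: Hl; rewrite -H eqxx.
Qed.

Lemma W_inj r s : r \in Reps F k -> s \in Reps F k ->
  hweight (r *m MM) = hweight (s *m MM) -> r = s.
Proof.
rewrite !inE => Hr Hs; rewrite !weightM => /(bin_inj (a := fun j => dd r (nth 0 P j) != 0) (b := fun j => dd s (nth 0 P j) != 0)) H.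
have H2 : forall v, (dd r v == 0) = (dd s v == 0).
  move=> v; case: (eqVneq v 0) => [->|Hv]; first by rewrite !dd0 eqxx.
  case: (rep_decomp Hv) => a [p [Ha Hp ->]].
  rewrite !dd_scaler !mulf_eq0 (negbTE Ha) /=.
  have Hin : p \in P by rewrite mem_enum inE.
  have Hj : (index p P < N)%N by rewrite -size_P index_mem.
  move: (H _ Hj); rewrite nth_index //.
  by case: (dd r p == 0); case: (dd s p == 0).
case: (dd_prop (rep_neq0 Hr) H2) => c E.
by rewrite (rep_uniq Hs Hr E).
Qed.

Lemma hweight_scale (c : 'rV[F]_n) a : a != 0 -> hweight (a *: c) = hweight c.
Proof.
move=> Ha; rewrite /hweight; apply: eq_card => i.
by rewrite !inE mxE mulf_eq0 negb_or Ha.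
Qed.

Lemma core : exists C : {vspace 'rV[F]_n},
  [/\ \dim C = k, code_nondegenerate C & size (weight_set C) = N].
Proof.
pose f : 'Hom('rV[F]_k, 'rV[F]_n) := linfun (mulmxr MM).
have fE : forall u, f u = u *m MM by move=> u; rewrite lfunE.
have Hinj : injective f.
  move=> x y; rewrite !fE => /eqP; rewrite -subr_eq0 -mulmxBl => /eqP /injM /eqP.
  by rewrite subr_eq0 => /eqP.
have memC : forall c, (c \in limg f) = [exists u, c == u *m MM].
  move=> c; apply/memv_imgP/existsP => [[u _ ->]|[u /eqP ->]].
    by exists u; rewrite fE.
  by exists u; rewrite ?memvf ?fE.
exists (limg f); split.
- rewrite limg_dim_eq; first by rewrite dimvf /dim /= mul1n.
  by rewrite capfv; apply/eqP/lker0P.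
- move=> i; have := col_rep i; rewrite inE => /rep_neq0 /neq0_entry [l Hl].
  exists (delta_mx 0 l *m MM); first by rewrite memC; apply/existsP; exists (delta_mx 0 l).
  by rewrite entryM dd_sym dd_delta.
- rewrite /weight_set.
  set s := [seq _ | _ <- _].
  have Hperm : perm_eq (undup s) [seq hweight (r *m MM) | r <- P].
    apply: uniq_perm; first exact: undup_uniq.
      rewrite map_inj_in_uniq ?enum_uniq //.
      by move=> r1 r2; rewrite !mem_enum; apply: W_inj.
    move=> x; rewrite mem_undup; apply/mapP/mapP.
      case=> c; rewrite mem_filter mem_enum in_setT andbT memC => /andP [/existsP [u /eqP Hu] Hc] ->.
      have Hu0 : u != 0 by apply: contraNneq Hc => Hu0; rewrite Hu Hu0 mul0mx.
      case: (rep_decomp Hu0) => a [r [Ha Hr Eu]].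
      exists r; first by rewrite mem_enum inE.
      by rewrite Hu Eu -scalemxAl hweight_scale.
    case=> r; rewrite mem_enum inE => Hr ->.
    exists (r *m MM) => //.
    rewrite mem_filter mem_enum in_setT andbT memC.
    apply/andP; split; first by apply/existsP; exists r.
    by apply/eqP => /injM Hr0; move: (rep_neq0 Hr); rewrite Hr0 eqxx.
  by rewrite (perm_size Hperm) size_map size_P.
Qed.

End Code.

Theorem mainTheorem1 (F : finFieldType) (k : nat) (hk : (2 <= k)%N) :
  exists C : {vspace 'rV[F]_(2 ^ theta #|F| (k - 1) - 1)},
    [/\ \dim C = k, code_nondegenerate C & is_MWS C].
Proof.
have Hk : (0 < k)%N by apply: leq_trans hk.
have E := theta_Reps F Hk.
rewrite E.
case: (core F k) => C [H1 H2 H3].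
exists C; split => //.
by rewrite /is_MWS H1 H3 -subn1 E.
Qed.
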